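(* There is no function $f:\mathbb{N}\to\mathbb{N}$ such that $\operatorname{bw}(u(D))\le f(\operatorname{dbw}(D))$ for every digraph $D$.
   Context: $u(D)$ denotes the underlying undirected (multi)graph of $D$, with one undirected edge $xy$ for each directed edge $\vec{xy}$. The branch-width $\operatorname{bw}(G)$ of an undirected (multi)graph $G$ is the minimum width of a branch decomposition $(T,\tau)$, where $T$ is a tree of maximum degree at most three, $\tau$ a bijection from the leaves of $T$ onto $E(G)$, the order of an edge $t$ of $T$ is the number of vertices incident both with an edge in $\tau(Y)$ and an edge in $E(G)\setminus\tau(Y)$ ($Y$ the leaves on one side of $T-t$), and the width is the maximum order (0 if none). Directed branch-width: for $X\subseteq E(D)$, $S^V_X=\{y: \exists x,z,\ \vec{xy}\in E(D)\setminus X,\ \vec{yz}\in X\}$, $f_D(X)=|S^V_X\cup S^V_{E(D)\setminus X}|$; $\operatorname{dbw}(D)$ is defined like branch-width but with the order of a tree edge equal to $f_D(\beta(Y))$ for a bijection $\beta$ from leaves onto $E(D)$. *)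

(* Defs.v *)
From mathcomp Require Import all_boot.
From Stdlib Require Import ClassicalEpsilon.

Set Implicit Arguments.
Unset Strict Implicit.
Unset Printing Implicit Defensive.

(* Least natural number satisfying a (Prop) predicate; 0 if none. *)
Definition minnat (P : nat -> Prop) : nat :=
  epsilon (inhabits 0%N) (fun k => P k /\ forall j, P j -> (k <= j)%N).

(* A tree: finite nonempty node type, symmetric irreflexive adjacency,
   connected, and acyclic (every edge is a bridge). *)
Definition is_tree (N : finType) (adj : rel N) : Prop :=
  [/\ symmetric adj, irreflexive adj, (0 < #|N|)%N,
      (forall x y : N, connect adj x y) &
      (forall a b : N, adj a b ->
         ~~ connect [rel x y | adj x y &&
                        ~~ (((x == a) && (y == b)) || ((x == b) && (y == a)))] a b)].

Definition degree (N : finType) (adj : rel N) (x : N) : nat := #|[set y | adj x y]|.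

(* leaves: nodes of degree at most 1 (degree 0 only for the one-node tree) *)
Definition is_leaf (N : finType) (adj : rel N) (x : N) : bool := (degree adj x <= 1)%N.

Definition cut_rel (N : finType) (adj : rel N) (a b : N) : rel N :=
  [rel x y | adj x y && ~~ (((x == a) && (y == b)) || ((x == b) && (y == a)))].

Definition side_leaves (N : finType) (adj : rel N) (a b : N) : {set N} :=
  [set l | is_leaf adj l && connect (cut_rel adj a b) a l].

(* A branch-type decomposition of the finite set E with respect to the
   connectivity function conn, of width at most k:
   a tree T of max degree <= 3 and a bijection tau from the leaves of T
   onto E (given as a function on nodes, bijective on the leaves), such that
   every tree edge ab has order conn(tau(Y)) <= k, Y the leaves on one side. *)
Definition decomp_width_le (E : finType) (conn : {set E} -> nat) (k : nat) : Prop :=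
  exists (N : finType) (adj : rel N) (tau : N -> E),
    [/\ is_tree adj,
        (forall x, (degree adj x <= 3)%N),
        {in is_leaf adj &, injective tau},
        (forall e, exists2 l, is_leaf adj l & tau l = e) &
        (forall a b, adj a b -> (conn (tau @: side_leaves adj a b) <= k)%N)].

Definition decomp_width (E : finType) (conn : {set E} -> nat) : nat :=
  minnat (decomp_width_le conn).

Record mgraph := MGraph {
  mV : finType;
  mE : finType;
  mends : mE -> mV * mV  (* an edge joins its two ends (unordered) *)
}.

Definition incident (G : mgraph) (v : mV G) (e : mE G) : bool :=
  (v == (mends e).1) || (v == (mends e).2).

Definition uorder (G : mgraph) (X : {set mE G}) : nat :=
  #|[set v : mV G | [exists e in X, incident v e] && [exists e in ~: X, incident v e]]|.

Definition bw (G : mgraph) : nat := decomp_width (@uorder G).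

Record digraph := Digraph {
  dV : finType;
  dE : finType;
  dtail : dE -> dV;
  dhead : dE -> dV
}.

(* simple digraph: no loops, no parallel edges (antiparallel pairs allowed) *)
Definition simple_digraph (D : digraph) : Prop :=
  (forall e : dE D, dtail e <> dhead e) /\
  (forall e1 e2 : dE D, dtail e1 = dtail e2 -> dhead e1 = dhead e2 -> e1 = e2).

Definition u (D : digraph) : mgraph := @MGraph (dV D) (dE D) (fun e => (dtail e, dhead e)).

Definition SV (D : digraph) (X : {set dE D}) : {set dV D} :=
  [set y | [exists e1 in ~: X, dhead e1 == y] && [exists e2 in X, dtail e2 == y]].

Definition fD (D : digraph) (X : {set dE D}) : nat := #|SV X :|: SV (~: X)|.

Definition dbw (D : digraph) : nat := decomp_width (@fD D).

(* Main.v *)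
Require Import Defs.
From mathcomp Require Import all_boot zify.
From Stdlib Require Import Classical ClassicalEpsilon.
Set Implicit Arguments. Unset Strict Implicit. Unset Printing Implicit Defensive.

Lemma min_exists (P : nat -> Prop) : (exists k, P k) ->
  exists k, P k /\ forall j, P j -> (k <= j)%N.
Proof.
move=> [k Pk].
suff H : forall m k, (k <= m)%N -> P k -> exists k, P k /\ forall j, P j -> (k <= j)%N.
  exact: (H k k (leqnn k) Pk).
elim=> [|m IH] k' Hk Pk'.
  exists k'; split=> // j _; by move: Hk; rewrite leqn0 => /eqP->.
case: (classic (exists j, P j /\ (j < k')%N)) => [[j [Pj ltj]]|nj].
  apply: (IH j) => //; rewrite -ltnS; exact: leq_trans ltj Hk.
exists k'; split=> // j Pj; rewrite leqNgt; apply/negP=> ltj; apply: nj; by exists j.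
Qed.

Lemma minnat_spec (P : nat -> Prop) : (exists k, P k) ->
  P (minnat P) /\ forall j, P j -> (minnat P <= j)%N.
Proof.
move=> /min_exists H; rewrite /minnat.
exact: (epsilon_spec (inhabits 0%N) (fun k => P k /\ forall j, P j -> (k <= j)%N) H).
Qed.

Section Tree.
Variables (E N : finType) (adj : rel N) (tau : N -> E).
Hypothesis Htree : is_tree adj.

Lemma adj_sym : symmetric adj. Proof. by case: Htree. Qed.

Lemma cut_relC a b : cut_rel adj a b =2 cut_rel adj b a.
Proof. by move=> x y; rewrite /cut_rel /= orbC. Qed.

Lemma cut_sym a b : symmetric (cut_rel adj a b).
Proof.
move=> x y; rewrite /cut_rel /= adj_sym; congr (_ && ~~ _).
by rewrite orbC; congr (_ || _); rewrite andbC.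
Qed.

Lemma bridge a b : adj a b -> ~~ connect (cut_rel adj a b) a b.
Proof. by case: Htree => _ _ _ _; apply. Qed.

Lemma path_avoid w v x p : path adj x p -> all (fun y => y != v) (x :: p) ->
  path (cut_rel adj w v) x p.
Proof.
elim: p x => //= y p IH x /andP[axy pp] /and3P[xv yv ap].
rewrite IH ?yv ?ap // andbT /cut_rel /= axy /=.
by rewrite negb_or !negb_and (negbTE yv) (negbTE xv) !orbT.
Qed.

Definition Lv a b := side_leaves adj a b.
Definition Tv a b := tau @: Lv a b.
Definition Rv a b := [set y | connect (cut_rel adj a b) a y].

Lemma disjT a b : {in is_leaf adj &, injective tau} -> adj a b ->
  forall e, e \in Tv b a -> e \notin Tv a b.
Proof.
move=> Hinj ab e /imsetP[l1 Hl1 ->]; apply/negP=> /imsetP[l2 Hl2 Heq].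
move: Hl1 Hl2; rewrite !inE => /andP[lf1 c1] /andP[lf2 c2].
have El := Hinj _ _ lf1 lf2 Heq; subst l2.
apply: (negP (bridge ab)).
apply: (connect_trans c2).
rewrite (sym_connect_sym (cut_sym a b)).
by rewrite (eq_connect (cut_relC a b)).
Qed.

Lemma dichot (M : nat) : {in is_leaf adj &, injective tau} ->
  forall a b, adj a b -> (#|Tv a b| <= M \/ #|~: Tv a b| <= M)%N ->
  (#|Tv a b| <= M \/ #|Tv b a| <= M)%N.
Proof.
move=> Hinj a b ab [H|H]; [by left|right].
apply: leq_trans H; apply: subset_leq_card; apply/subsetP=> e He.
by rewrite inE (disjT Hinj ab He).
Qed.

Lemma cover b l : is_leaf adj l -> l != b -> exists2 c, adj b c & l \in Lv c b.
Proof.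
move=> lf lb.
have : connect adj b l by case: Htree => _ _ _ H _; exact: H.
move=> /connectP[p pp El]; move: lf lb; rewrite El.
case: (shortenP pp) => q pq uq _ {El pp}.
case: q pq uq => [|c q] /=; first by rewrite eqxx.
move=> /andP[bc pq] /andP[bnq uq] lf lb.
exists c => //; rewrite inE lf /=.
apply/connectP; exists q => //.
apply: path_avoid => //.
rewrite /= in bnq; rewrite inE negb_or in bnq.
case/andP: bnq => bc' bq.
rewrite /= eq_sym bc' /=; apply/allP=> y yq; apply/negP=> /eqP Ey.
by move: bq; rewrite -Ey yq.
Qed.

Lemma adj_irr : irreflexive adj. Proof. by case: Htree. Qed.

Lemma R_sub a b c : adj a b -> adj b c -> a != c -> Rv a b \proper Rv b c.
Proof.
move=> ab bc ac.
have bnc : b != c by apply/eqP=> Eb; move: bc; rewrite Eb adj_irr.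
apply/properP; split; last first.
  by exists b; rewrite !inE ?connect0 //; apply: bridge.
apply/subsetP=> y; rewrite !inE => /connectP[p pp ->].
have ba : cut_rel adj b c b a.
  rewrite /cut_rel /= adj_sym ab /= (negbTE ac) (negbTE bnc) /=.
  by rewrite andbF.
apply: (connect_trans (connect1 ba)).
rewrite -(eq_connect (cut_relC c b)).
apply/connectP; exists p => //.
apply: path_avoid; first by apply: sub_path pp => x z /andP[].
apply/allP=> z zp; apply/negP=> /eqP Ez.
have := path_connect pp zp; rewrite Ez => H.
by move: (bridge ab); rewrite H.
Qed.

Lemma sink M : (forall a b, adj a b -> #|Tv a b| <= M \/ #|Tv b a| <= M)%N ->
  forall a0 b0, adj a0 b0 -> exists b, forall c, adj b c -> (#|Tv c b| <= M)%N.
Proof.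
move=> Hd a0 b0 ab0.
have [p0 Hp0] : exists p0 : N * N, adj p0.1 p0.2 && (#|Tv p0.1 p0.2| <= M)%N.
  case: (Hd _ _ ab0) => H; first by exists (a0, b0); rewrite /= ab0 H.
  by exists (b0, a0); rewrite /= adj_sym ab0 H.
case: (@arg_maxnP (N * N)%type p0 (fun p => adj p.1 p.2 && (#|Tv p.1 p.2| <= M)%N)
         (fun p => #|Rv p.1 p.2|) Hp0) => [[a b]] /= /andP[ab sab] Hmax.
exists b => c bc.
case: (eqVneq c a) => [->|ca] //.
case: (Hd _ _ bc) => [sbc|//].
have := Hmax (b, c); rewrite /= bc sbc => /(_ isT) H.
have := proper_card (R_sub ab bc (ltac:(by rewrite eq_sym))).
by rewrite ltnNge H.
Qed.

Lemma card_bigcup_le (I T : finType) (A : {pred I}) (F : I -> {set T}) :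
  (#|\bigcup_(i in A) F i| <= \sum_(i in A) #|F i|)%N.
Proof.
apply: (big_ind2 (fun (X : {set T}) (s : nat) => (#|X| <= s)%N)) => //; first by rewrite cards0.
move=> X1 s1 X2 s2 H1 H2; apply: leq_trans (leq_card_setU X1 X2) _.
exact: leq_add.
Qed.

Lemma total_bound M :
  {in is_leaf adj &, injective tau} ->
  (forall e, exists2 l, is_leaf adj l & tau l = e) ->
  (forall x, degree adj x <= 3)%N ->
  (forall a b, adj a b -> #|Tv a b| <= M \/ #|~: Tv a b| <= M)%N ->
  (#|E| <= 1 + 3 * M)%N.
Proof.
move=> Hinj Hsurj Hdeg Hd.
have [x0 _] : exists x0 : N, true.
  by case: Htree => _ _ /card_gt0P[x _] _ _; exists x.
case: (classic (exists a b, adj a b)) => [[a0 [b0 ab0]]|noedge]; last first.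
  have allx0 : forall y, y = x0.
    move=> y; have : connect adj x0 y by case: Htree => _ _ _ H _; exact: H.
    case/connectP=> [[|z p]] /=; first by move=> _ ->.
    by case/andP=> H _; case: noedge; exists x0, z.
  rewrite -cardsT; apply: leq_trans (_ : #|[set tau x0]| <= _)%N; last first.
    by rewrite cards1.
  apply: subset_leq_card; apply/subsetP=> e _.
  by case: (Hsurj e) => l _ <-; rewrite (allx0 l) set11.
have Hd' := fun a b ab => dichot Hinj ab (Hd a b ab).
case: (sink Hd' ab0) => b Hb.
rewrite -cardsT.
apply: leq_trans (_ : #|tau b |: \bigcup_(c in [set c | adj b c]) Tv c b| <= _)%N.
  apply: subset_leq_card; apply/subsetP=> e _.
  case: (Hsurj e) => l lf <-.
  case: (eqVneq l b) => [->|lb]; first by rewrite setU11.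
  case: (cover lf lb) => c bc lc.
  rewrite setU1r //; apply/bigcupP; exists c; first by rewrite inE.
  exact: imset_f.
rewrite cardsU1; apply: leq_add; first by case: (_ \notin _).
apply: leq_trans (card_bigcup_le _ _) _.
apply: leq_trans (_ : \sum_(c in [set c | adj b c]) M <= _)%N.
  by apply: leq_sum => c; rewrite inE => /Hb.
rewrite sum_nat_const leq_mul2r; apply/orP; right; exact: Hdeg.
Qed.
End Tree.
Section Knn.
Variable n : nat.
Definition Knn : digraph :=
  @Digraph ('I_n + 'I_n)%type ('I_n * 'I_n)%type (fun e => inl e.1) (fun e => inr e.2).

Definition G := u Knn.

Lemma inc_l (i : 'I_n) (e : 'I_n * 'I_n) : @incident G (inl i) e = (e.1 == i).
Proof. by rewrite /incident /= orbF eq_sym. Qed.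
Lemma inc_r (j : 'I_n) (e : 'I_n * 'I_n) : @incident G (inr j) e = (e.2 == j).
Proof. by rewrite /incident /= eq_sym. Qed.

Definition Sset (X : {set 'I_n * 'I_n}) : {set 'I_n + 'I_n} :=
  [set v : 'I_n + 'I_n | [exists e in X, @incident G v e] && [exists e in ~: X, @incident G v e]].

Lemma helper (Y : {set 'I_n * 'I_n}) (i0 j0 : 'I_n) :
  (i0, j0) \in Y ->
  (forall v, v \notin Sset Y -> ~~ ([exists e in Y, @incident G v e] && [exists e in ~: Y, @incident G v e])) ->
  inr j0 \notin Sset Y ->
  forall i j : 'I_n, inl i \notin Sset Y -> inr j \notin Sset Y -> (i, j) \in Y.
Proof.
move=> Hin Hg Hj0 i j Hi Hj.
have H1 : (i, j0) \in Y.
  apply/negPn/negP => Hn.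
  move: (Hg _ Hj0); rewrite negb_and => /orP[] /existsP; case.
    by exists (i0, j0); rewrite Hin inc_r eqxx.
  by exists (i, j0); rewrite inE Hn inc_r eqxx.
apply/negPn/negP => Hn.
move: (Hg _ Hi); rewrite negb_and => /orP[] /existsP; case.
  by exists (i, j0); rewrite H1 inc_l eqxx.
by exists (i, j); rewrite inE Hn inc_l eqxx.
Qed.

Lemma SsetC Y : Sset (~: Y) = Sset Y.
Proof. by apply/setP=> v; rewrite !inE setCK andbC. Qed.

Lemma Hgood Y v : v \notin Sset Y ->
  ~~ ([exists e in Y, @incident G v e] && [exists e in ~: Y, @incident G v e]).
Proof. by rewrite inE. Qed.

Lemma side_card (SS : {set 'I_n + 'I_n}) (g : 'I_n -> 'I_n + 'I_n) :
  injective g -> (#|[set i | g i \in SS]| <= #|SS|)%N.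
Proof.
move=> ig; rewrite -(card_imset _ ig); apply: subset_leq_card.
by apply/subsetP=> v /imsetP[i]; rewrite inE => H ->.
Qed.

Lemma exists_out (SS : {set 'I_n + 'I_n}) (g : 'I_n -> 'I_n + 'I_n) k :
  injective g -> (#|SS| <= k)%N -> (k < n)%N -> exists i, g i \notin SS.
Proof.
move=> ig Hk kn.
have : (0 < #|~: [set i | g i \in SS]|)%N.
  have := cardsC [set i | g i \in SS]; rewrite card_ord => Hc.
  have := leq_trans (side_card SS ig) Hk => H.
  rewrite lt0n; apply/eqP=> H0; rewrite H0 addn0 in Hc.
  by move: (leq_ltn_trans H kn); rewrite Hc ltnn.
case/card_gt0P=> i; rewrite !inE => Hi; by exists i.
Qed.

Lemma core (X : {set 'I_n * 'I_n}) k : (k < n)%N -> (#|Sset X| <= k)%N ->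
  (#|X| <= 2 * n * k \/ #|~: X| <= 2 * n * k)%N.
Proof.
move=> kn Hk.
have il : injective (@inl 'I_n 'I_n) by move=> a b [].
have ir : injective (@inr 'I_n 'I_n) by move=> a b [].
set SA := [set i | inl i \in Sset X]; set SB := [set j | inr j \in Sset X].
set Bad := [set e : 'I_n * 'I_n | (inl e.1 \in Sset X) || (inr e.2 \in Sset X)].
have cBad : (#|Bad| <= 2 * n * k)%N.
  apply: leq_trans (_ : #|setX SA [set: 'I_n] :|: setX [set: 'I_n] SB| <= _)%N.
    apply: subset_leq_card; apply/subsetP=> [[i j]]; rewrite !inE /=.
    by case/orP=> ->; rewrite ?orbT.
  apply: leq_trans (leq_card_setU _ _) _.
  rewrite !cardsX cardsT card_ord.
  have hA : (#|SA| <= k)%N := leq_trans (side_card _ il) Hk.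
  have hB : (#|SB| <= k)%N := leq_trans (side_card _ ir) Hk.
  rewrite -mulnA mul2n -addnn; apply: leq_add.
    by rewrite mulnC leq_mul2l hA orbT.
  by rewrite leq_mul2l hB orbT.
case: (exists_out il Hk kn) => i0 Hi0.
case: (exists_out ir Hk kn) => j0 Hj0.
case: (boolP ((i0, j0) \in X)) => Hin.
  right; apply: leq_trans cBad; apply: subset_leq_card; apply/subsetP=> [[i j]].
  rewrite !inE /= => Hn; apply/negPn/negP; rewrite negb_or => /andP[Hi Hj]; move/negP: Hn; apply.
  have Hi' : inl i \notin Sset X by rewrite inE.
  have Hj' : inr j \notin Sset X by rewrite inE.
  exact: (helper Hin (@Hgood X) Hj0 Hi' Hj').
left; apply: leq_trans cBad; apply: subset_leq_card; apply/subsetP=> [[i j]].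
rewrite !inE /= => Hn; apply/negPn/negP; rewrite negb_or => /andP[Hi Hj].
have Hin' : (i0, j0) \in ~: X by rewrite inE.
have Hi' : inl i \notin Sset (~: X) by rewrite SsetC inE.
have Hj' : inr j \notin Sset (~: X) by rewrite SsetC inE.
rewrite -(SsetC X) in Hj0.
have := helper Hin' (@Hgood (~: X)) Hj0 Hi' Hj'.
by rewrite inE Hn.
Qed.
End Knn.
Section Cat.
Variable p : nat.
Notation m := p.+2.
Definition CN := ('I_m + 'I_m)%type.
Definition catadj : rel CN := fun x y =>
  match x, y with
  | inl i, inl j => (i.+1 == j :> nat) || (j.+1 == i :> nat)
  | inl i, inr j => i == j :> nat
  | inr j, inl i => i == j :> nat
  | _, _ => false
  end.

Lemma ordE (u v : 'I_m) : (u == v) = (val u == val v). Proof. by []. Qed.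

Lemma sum_eqE (x y : CN) : (x == y) =
  match x, y with inl u, inl v => val u == val v | inr u, inr v => val u == val v | _, _ => false end.
Proof. by case: x; case: y. Qed.

Lemma cat_sym : symmetric catadj.
Proof. case=> i; case=> j //=; try (by rewrite orbC); by rewrite eq_sym. Qed.

Lemma cat_irr : irreflexive catadj.
Proof. case=> i //=; lia. Qed.


Lemma cat_conn0 k (Hk : k < m) : connect catadj (inl (Ordinal Hk)) (inl ord0).
Proof.
elim: k Hk => [|k IH] Hk.
  by apply: eq_connect0; congr inl; apply: val_inj.
apply: connect_trans (connect1 _) (IH (ltnW Hk)).
by rewrite /= eqxx orbT.
Qed.

Lemma cat_conn x y : connect catadj x y.
Proof.
suff H : forall x, connect catadj x (inl ord0).
  by apply: connect_trans (H x) _; rewrite (sym_connect_sym cat_sym).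
case=> [[k Hk]|i]; first exact: cat_conn0.
apply: connect_trans (connect1 (_ : catadj (inr i) (inl i))) _; first by rewrite /=.
by case: i => k Hk; exact: cat_conn0.
Qed.

Definition idx (x : CN) : nat := match x with inl i => val i | inr i => val i end.

Lemma cat_bridge a b : catadj a b -> ~~ connect (cut_rel catadj a b) a b.
Proof.
case: a => i; case: b => j //= H; apply/negP.
- pose Q := [pred x : CN | idx x <= minn i j].
  have cl : closed (cut_rel catadj (inl i) (inl j)) Q.
    move=> x y; rewrite /cut_rel /=.
    case: x => u; case: y => v /=; rewrite ?sum_eqE /= !inE /= ?ordE; lia.
  move/(closed_connect cl); rewrite !inE /=; lia.
- pose Q := [pred x : CN | match x with inr u => val u == val j | _ => false end].
  have cl : closed (cut_rel catadj (inl i) (inr j)) Q.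
    move=> x y; rewrite /cut_rel /=.
    case: x => u; case: y => v /=; rewrite ?sum_eqE /= !inE /= ?ordE; lia.
  move/(closed_connect cl); rewrite !inE /=; lia.
- pose Q := [pred x : CN | match x with inr u => val u == val i | _ => false end].
  have cl : closed (cut_rel catadj (inr i) (inl j)) Q.
    move=> x y; rewrite /cut_rel /=.
    case: x => u; case: y => v /=; rewrite ?sum_eqE /= !inE /= ?ordE; lia.
  move/(closed_connect cl); rewrite !inE /=; lia.
Qed.

Lemma deg_r j : degree catadj (inr j) = 1.
Proof.
rewrite /degree (_ : [set y | catadj (inr j) y] = [set inl j]) ?cards1 //.
apply/setP=> y; rewrite !inE; case: y => v /=; rewrite ?sum_eqE /=; lia.
Qed.

Lemma deg_l_le i : (degree catadj (inl i) <= 3)%N.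
Proof.
rewrite /degree.
have Hc : forall a b c : CN, (#|[set a; b; c]| <= 3)%N.
  move=> a b c; apply: leq_trans (leq_card_setU _ _) _.
  by rewrite cardsU1 !cards1; case: (_ \notin _).
apply: leq_trans (Hc (inr i) (inl (inord i.-1)) (inl (inord i.+1))).
  apply: subset_leq_card; apply/subsetP=> y; rewrite !inE.
  case: y => v /=; rewrite ?sum_eqE /=; last by lia.
  case/orP=> /eqP E.
    rewrite (@inordK p.+1 i.+1); first lia.
    by rewrite E.
  rewrite (@inordK p.+1 i.-1); first lia.
  by apply: leq_ltn_trans (leq_pred _) (ltn_ord i).
Qed.

Lemma deg_l_ge i : (2 <= degree catadj (inl i))%N.
Proof.
rewrite /degree.
set k := if nat_of_ord i == 0 then 1 else (nat_of_ord i).-1.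
have Hk : k < m by rewrite /k; case: ifP => _ //; apply: leq_ltn_trans (leq_pred _) (ltn_ord i).
apply: leq_trans (_ : #|[set inr i; inl (inord k)]| <= _)%N.
  by rewrite cards2.
apply: subset_leq_card; apply/subsetP=> y; rewrite !inE.
case/orP=> /eqP ->; rewrite /= ?eqxx //.
rewrite inordK //; rewrite /k; case: ifP; lia.
Qed.

Lemma cat_leaf x : is_leaf catadj x = (if x is inr _ then true else false).
Proof.
rewrite /is_leaf; case: x => v; first by have := deg_l_ge v; lia.
by rewrite deg_r.
Qed.

Lemma cat_tree : is_tree catadj.
Proof.
split.
- exact: cat_sym.
- exact: cat_irr.
- by apply/card_gt0P; exists (inr ord0).
- exact: cat_conn.
- exact: cat_bridge.
Qed.
End Cat.

Lemma decomp_exists (E : finType) (conn : {set E} -> nat) k :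
  (forall X, conn X <= k)%N -> (1 < #|E|)%N -> decomp_width_le conn k.
Proof.
move=> Hc HE.
pose p := #|E|.-2.
have Hp : #|E| = p.+2 by rewrite /p; lia.
have [e0 _] : exists e0 : E, true.
  by have /card_gt0P[x _] : (0 < #|E|)%N by lia; exists x.
pose tau (x : CN p) : E := nth e0 (enum E) (idx x).
have Hsz : size (enum E) = p.+2 by rewrite -cardE.
exists (CN p), (@catadj p), tau; split.
- exact: cat_tree.
- by case=> v; [exact: deg_l_le | rewrite deg_r].
- move=> x y Hx Hy.
  have Hx' : is_leaf (@catadj p) x := Hx.
  have Hy' : is_leaf (@catadj p) y := Hy.
  rewrite cat_leaf in Hx'; rewrite cat_leaf in Hy'.
  case: x Hx Hx' => // i _ _; case: y Hy Hy' => // j _ _.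
  rewrite /tau /= => /eqP; rewrite nth_uniq ?Hsz ?ltn_ord ?enum_uniq //.
  by move=> /eqP Hij; congr inr; apply: val_inj.
- move=> e.
  have Hi : (index e (enum E) < p.+2)%N by rewrite -Hsz index_mem mem_enum.
  exists (inr (inord (index e (enum E)))); first by rewrite cat_leaf.
  by rewrite /tau /= inordK // nth_index // mem_enum.
- by move=> a b _; apply: Hc.
Qed.

Lemma fD_zero n (X : {set dE (Knn n)}) : (fD X <= 0)%N.
Proof.
rewrite /fD leqn0 cards_eq0; apply/eqP/setP=> y; rewrite !inE.
apply/negP=> /orP[] /andP[/existsP[e1 /andP[_ /eqP H1]] /existsP[e2 /andP[_ /eqP H2]]];
  by move: H1 H2; rewrite /= => <-.
Qed.

Theorem mainTheorem7 :
  ~ exists f : nat -> nat,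
      forall D : digraph, simple_digraph D -> (bw (u D) <= f (dbw D))%N.
Proof.
move=> [f Hf].
set c := f 0.
set n := (6 * c + 2)%N.
have Hs : simple_digraph (Knn n).
  split; first by move=> e.
  by move=> [i1 j1] [i2 j2] /= [->] [->].
have HE : (1 < #|dE (Knn n)|)%N.
  rewrite /= card_prod card_ord /n; nia.
have Hd : dbw (Knn n) = 0.
  have Pfd : decomp_width_le (@fD (Knn n)) 0 := decomp_exists (@fD_zero n) HE.
  have [_ Hmin] := minnat_spec (ex_intro _ 0 Pfd).
  by apply/eqP; rewrite -leqn0; apply: Hmin.
have Hb := Hf _ Hs; rewrite Hd -/c in Hb.
have Pbw : exists k, decomp_width_le (@uorder (u (Knn n))) k.
  exists #|mV (u (Knn n))|; apply: decomp_exists => // X; exact: max_card.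
have [[N [adj [tau [Ht Hdeg Hinj Hsurj Hw]]]] _] := minnat_spec Pbw.
set k := bw (u (Knn n)) in Hb Hw.
have kn : (k < n)%N by rewrite /n; lia.
have Hcore : forall a b, adj a b ->
    (#|Tv adj tau a b| <= 2 * n * k \/ #|~: Tv adj tau a b| <= 2 * n * k)%N.
  move=> a b ab; apply: core => //; exact: Hw.
have := total_bound Ht (M := 2 * n * k) Hinj Hsurj Hdeg Hcore.
rewrite /= card_prod card_ord /n; nia.
Qed.
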